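(* Let $n\geq 1$ and $k\geq 1$ be integers with $k\not\equiv 1 \pmod 3$. Then $\gcd(C_{k,n},C_{k,n+1})=1$.
   Context: For an integer $k\geq 1$, the generalized balancing-Lucas numbers are defined by $C_{k,0}=1$, $C_{k,1}=3$ and $C_{k,n}=3kC_{k,n-1}+(1-k)C_{k,n-2}$ for $n\geq 2$. *)

(* Defs.v *)
From mathcomp Require Import all_boot all_order all_algebra.
Set Implicit Arguments. Unset Strict Implicit. Unset Printing Implicit Defensive.
Import GRing.Theory Num.Theory.
Local Open Scope ring_scope.

(* Generalized balancing-Lucas numbers, as integers:
   C_{k,0} = 1, C_{k,1} = 3, C_{k,n} = 3k C_{k,n-1} + (1-k) C_{k,n-2}. *)
Fixpoint balC_pair (k : nat) (n : nat) : int * int :=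
  match n with
  | 0 => (1, 3)
  | n'.+1 => let p := balC_pair k n' in
             (p.2, 3 * k%:Z * p.2 + (1 - k%:Z) * p.1)
  end.

Definition balC (k n : nat) : int := (balC_pair k n).1.

(* Main.v *)
Require Import Defs.
From mathcomp Require Import all_boot all_order all_algebra.
From mathcomp Require Import ring.
Import GRing.Theory Num.Theory.
Local Open Scope ring_scope.

Lemma balC_rec k n : balC k n.+2 = 3 * k%:Z * balC k n.+1 + (1 - k%:Z) * balC k n.
Proof. by []. Qed.

Lemma balC1 k : balC k 1 = 3. Proof. by []. Qed.
Lemma balC0 k : balC k 0 = 1. Proof. by []. Qed.

Lemma balC_mod k n : exists q, balC k n = 3 ^+ n + (1 - k%:Z) * q.
Proof.
have H : forall n, (exists q, balC k n = 3 ^+ n + (1 - k%:Z) * q) /\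
                   (exists q, balC k n.+1 = 3 ^+ n.+1 + (1 - k%:Z) * q).
  elim=> [|m [[q1 H1] [q2 H2]]].
    by split; exists 0; rewrite ?balC0 ?balC1 mulr0 addr0 ?expr1.
  split; first by exists q2.
  exists (-3 * balC k m.+1 + 3 * q2 + balC k m).
  rewrite balC_rec H2 !exprS; ring.
by case: (H n).
Qed.

Lemma coprime3 k : (k %% 3 != 1)%N -> gcdz 3 (1 - k%:Z) = 1.
Proof.
move=> hk.
have E : (1 - k%:Z) = (- (k %/ 3)%:Z) * 3 + (1 - (k %% 3)%:Z).
  have -> : k%:Z = (k %/ 3 * 3 + k %% 3)%N%:Z by rewrite -divn_eq.
  rewrite PoszD PoszM; ring.
rewrite E; have G := gcdzMDl (- (k %/ 3)%:Z) 3%:R (1 - (k %% 3)%:Z).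
transitivity (gcdz 3%:R (1 - (k %% 3)%:Z)); first exact: G.
have : (k %% 3 < 3)%N by rewrite ltn_mod.
case: (k %% 3)%N hk => [|[|[|r]]] //= _ _.
Qed.

Lemma cop k n : (k %% 3 != 1)%N -> gcdz (balC k n) (balC k n.+1) = 1.
Proof.
move=> hk; elim: n => [|n IH]; first by [].
rewrite balC_rec.
apply: etrans (gcdzMDl (3 * k%:Z) (balC k n.+1) ((1 - k%:Z) * balC k n)) _.
have cp : coprimez (balC k n.+1) (balC k n) by rewrite /coprimez gcdzC IH.
apply: etrans (Gauss_gcdzl (1 - k%:Z) cp) _.
have [q ->] := balC_mod k n.+1.
apply: etrans (gcdzC _ _) _.
rewrite [X in gcdz _ X]addrC [X in gcdz _ (X + _)]mulrC.
apply: etrans (gcdzMDl q (1 - k%:Z) (3 ^+ n.+1)) _.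
have c3 : coprimez 3 (1 - k%:Z) by rewrite /coprimez coprime3.
have := coprimezXl n.+1 c3.
by rewrite /coprimez gcdzC => /eqP.
Qed.

Local Close Scope ring_scope.
Theorem mainTheorem12 (k n : nat) :
  (1 <= n)%N -> (1 <= k)%N -> (k %% 3 != 1)%N ->
  gcdz (balC k n) (balC k n.+1) = 1.
Proof. by move=> _ _ hk; apply: cop. Qed.
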